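(* Assume the setting in the context, with $0<\lambda<\eta<1$. Then $\lim_{k\to\infty}\|\nabla f(\theta_k)\|=0$.
   Context: Let $g:\mathbb{R}^n\to\mathbb{R}$, $h:\mathbb{R}^n\times\mathbb{R}^d\to\mathbb{R}$ satisfy: (A1) $h$ is twice differentiable in $x$, for each $\theta$ there are $0<\mu(\theta)\le L(\theta)$ with $\mu(\theta)I\preceq\nabla_x^2h(x,\theta)\preceq L(\theta)I$ for all $x$, and $\nabla_xh,\nabla^2_xh$ are continuous in $\theta$; (A2) $\nabla_x^2h$ is $L_H$-Lipschitz in $x$ and $\nabla^2_{x\theta}h$ is $L_J$-Lipschitz in $x$, uniformly in $\theta$. Let $\hat{x}(\theta)=\arg\min_xh(x,\theta)$, $f(\theta)=g(\hat{x}(\theta))$. (B) $f$ is continuously differentiable with $L_{\nabla f}$-Lipschitz gradient, $g$ continuously differentiable with $L_{\nabla g}$-Lipschitz gradient, $L_{\nabla f},L_{\nabla g}>0$, $g$ bounded below. Fix $\beta_0>0$, $0<\underline{\rho}<1<\overline{\rho}$, $\lambda<\eta$. Consider sequences $\theta_k\in\mathbb{R}^d$, $z_k\in\mathbb{R}^d\setminus\{0\}$, $\epsilon_k\ge0$, $\tilde{x}_k\in\mathbb{R}^n$ with $\|\tilde{x}_k-\hat{x}(\theta_k)\|\le\epsilon_k$, $\alpha_k,\beta_k>0$, with $\theta_{k+1}=\theta_k-\alpha_kz_k$ and $\|z_k-\nabla f(\theta_k)\|\le(1-\eta)\|z_k\|$ for all $k$. Set $w_k=\|\nabla g(\tilde{x}_k)\|+\|\nabla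 g(\tilde{x}_{k+1})\|$, $\bar{\epsilon}_k=\max\{\epsilon_k,\epsilon_{k+1}\}$, $\hat{s}_k=\sqrt{(\eta-\lambda)^2-4L_{\nabla f}(w_k\bar{\epsilon}_k+L_{\nabla g}\bar{\epsilon}_k^2)/\|z_k\|^2}$ (assumed real), $\underline{\alpha}_k=(\eta-\lambda-\hat{s}_k)/L_{\nabla f}$, $\overline{\alpha}_k=(\eta-\lambda+\hat{s}_k)/L_{\nabla f}$. Assume for every $k$: $\alpha_k=\underline{\rho}^{i_k}\beta_k$ where $i_k$ is the smallest nonnegative integer with $\underline{\rho}^{i_k}\beta_k\in[\underline{\alpha}_k,\overline{\alpha}_k]$; if $i_k>0$ then $\alpha_k>\underline{\rho}\,\overline{\alpha}_k$; and $\beta_{k+1}=\overline{\rho}\alpha_k$. *)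

(* Defs.v *)
From HB Require Import structures.
From mathcomp Require Import all_boot all_order all_algebra.
From mathcomp Require Import all_classical all_reals all_analysis.
Set Implicit Arguments. Unset Strict Implicit. Unset Printing Implicit Defensive.
Import Order.TTheory GRing.Theory Num.Theory.
Import numFieldNormedType.Exports.
Local Open Scope ring_scope.

Section Defs.
Variable R : realType.

Definition dotr {n : nat} (u v : 'rV[R]_n) : R := \sum_(i < n) u ord0 i * v ord0 i.
Definition enorm {n : nat} (u : 'rV[R]_n) : R := Num.sqrt (dotr u u).

Definition ebasis {n : nat} (i : 'I_n) : 'rV[R]_n := delta_mx ord0 i.

Definition grad {n : nat} (f : 'rV[R]_n -> R) (x : 'rV[R]_n) : 'rV[R]_n :=
  \row_i ('D_(ebasis i) f x).

Definition C1 {n : nat} (f : 'rV[R]_n -> R) : Prop :=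
  (forall x, differentiable f x) /\ continuous (grad f).

Definition lipschitz_grad {n : nat} (f : 'rV[R]_n -> R) (L : R) : Prop :=
  forall x y, enorm (grad f x - grad f y) <= L * enorm (x - y).

Definition gradx {n d : nat} (h : 'rV[R]_n -> 'rV[R]_d -> R) x theta : 'rV[R]_n :=
  grad (fun y => h y theta) x.

Definition hessx {n d : nat} (h : 'rV[R]_n -> 'rV[R]_d -> R) x theta : 'M[R]_n :=
  \matrix_(i, j) 'D_(ebasis j) (fun y => gradx h y theta ord0 i) x.

Definition hessxt {n d : nat} (h : 'rV[R]_n -> 'rV[R]_d -> R) x theta : 'M[R]_(n, d) :=
  \matrix_(i, j) 'D_(ebasis j) (fun t => gradx h x t ord0 i) theta.

Definition qform {n : nat} (A : 'M[R]_n) (v : 'rV[R]_n) : R := (v *m A *m v^T) ord0 ord0.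

End Defs.

(* Main.v *)
Require Import Defs.
From HB Require Import structures.
From mathcomp Require Import all_boot all_order all_algebra.
From mathcomp Require Import all_classical all_reals all_analysis.
From mathcomp Require Import ring lra.
Import Order.TTheory GRing.Theory Num.Theory.
Import numFieldNormedType.Exports.
Local Open Scope classical_set_scope.
Local Open Scope ring_scope.

Set Implicit Arguments. Unset Strict Implicit.
Section Dot.
Variable R : realType.
Variable n : nat.
Implicit Types u v w : 'rV[R]_n.

Lemma dotrC u v : dotr u v = dotr v u.
Proof. by apply: eq_bigr => i _; rewrite mulrC. Qed.

Lemma dotrDZl (a : R) u v w : dotr (a *: u + v) w = a * dotr u w + dotr v w.
Proof.
rewrite /dotr mulr_sumr -big_split /=; apply: eq_bigr => i _.
by rewrite !mxE mulrDl mulrA.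
Qed.

Lemma dotrNl u w : dotr (- u) w = - dotr u w.
Proof.
rewrite /dotr -sumrN; apply: eq_bigr => i _.
by rewrite mxE mulNr.
Qed.

Lemma dotrBl u v w : dotr (u - v) w = dotr u w - dotr v w.
Proof.
rewrite /dotr -sumrB; apply: eq_bigr => i _.
by rewrite !mxE mulrBl.
Qed.

Lemma dotrZl (a : R) u w : dotr (a *: u) w = a * dotr u w.
Proof.
rewrite /dotr mulr_sumr; apply: eq_bigr => i _.
by rewrite mxE mulrA.
Qed.

Lemma dotr_ge0 u : 0 <= dotr u u.
Proof. by apply: sumr_ge0 => i _; rewrite -expr2 sqr_ge0. Qed.

Lemma enorm_sqr u : enorm u ^+ 2 = dotr u u.
Proof. by rewrite /enorm sqr_sqrtr // dotr_ge0. Qed.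

Lemma enorm_ge0 u : 0 <= enorm u.
Proof. exact: sqrtr_ge0. Qed.

Lemma dotr0_eq u v : dotr u u = 0 -> dotr u v = 0.
Proof.
move=> /psumr_eq0P H.
rewrite /dotr big1 // => i _.
have : u ord0 i * u ord0 i = 0 by apply: H => // j _; rewrite -expr2 sqr_ge0.
by move/eqP; rewrite mulf_eq0 orbb => /eqP ->; rewrite mul0r.
Qed.

Lemma cauchy_schwarz2 u v : dotr u v ^+ 2 <= dotr u u * dotr v v.
Proof.
have [a0|apos] := eqVneq (dotr u u) 0.
  by rewrite dotr0_eq // a0 expr0n mul0r.
have agt0 : 0 < dotr u u by rewrite lt_neqAle eq_sym apos dotr_ge0.
set a := dotr u u in apos agt0 *; set b := dotr u v; set c := dotr v v.
have := dotr_ge0 ((- b / a) *: u + v).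
rewrite dotrDZl dotrC dotrDZl dotrC -/a -/b -/c.
idtac.
move=> H; rewrite dotrC dotrDZl -/b -/c in H.
have E : (- b / a) * ((- b / a) * a + b) + ((- b / a) * b + c) = c - b ^+ 2 / a.
  by field.
rewrite E subr_ge0 ler_pdivrMr // in H.
by rewrite mulrC.
Qed.

Lemma cauchy_schwarz u v : dotr u v <= enorm u * enorm v.
Proof.
apply: (le_trans (ler_norm _)).
rewrite -(sqrtr_sqr (dotr u v)) /enorm -sqrtrM ?dotr_ge0 //.
by rewrite ler_sqrt ?cauchy_schwarz2 // mulr_ge0 ?dotr_ge0.
Qed.

Lemma enormD u v : enorm (u + v) <= enorm u + enorm v.
Proof.
have E : dotr (u + v) (u + v) = dotr u u + 2 * dotr u v + dotr v v.
  rewrite /dotr mulr_sumr -!big_split /=; apply: eq_bigr => i _.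
  rewrite !mxE; ring.
rewrite {1}/enorm E -(ger0_norm (addr_ge0 (enorm_ge0 u) (enorm_ge0 v))).
rewrite -sqrtr_sqr ler_sqrt ?sqr_ge0 //.
have := cauchy_schwarz u v.
rewrite sqrrD !enorm_sqr; lra.
Qed.

Lemma enormZ (a : R) u : enorm (a *: u) = `|a| * enorm u.
Proof.
rewrite /enorm dotrZl dotrC dotrZl mulrA -expr2 sqrtrM ?sqr_ge0 //.
by rewrite sqrtr_sqr.
Qed.

End Dot.

Section Desc.
Variable R : realType.
Variable n : nat.

Lemma D_grad (f : 'rV[R]_n -> R) p v : differentiable f p ->
  'D_v f p = dotr (grad f p) v.
Proof.
move=> df; rewrite deriveE // {1}(row_sum_delta v) linear_sum /dotr.
apply: eq_bigr => i _; rewrite linearZ /= mxE deriveE // /ebasis mulrC.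
by [].
Qed.

Lemma line_derive (f : 'rV[R]_n -> R) x v t :
  differentiable f (x + t *: v) ->
  is_derive t 1 (fun s => f (x + s *: v)) (dotr (grad f (x + t *: v)) v).
Proof.
move=> df.
have E : (fun h : R => h^-1 *: (((fun s => f (x + s *: v)) \o shift t) (h *: 1)
           - f (x + t *: v)))
       = (fun h => h^-1 *: ((f \o shift (x + t *: v)) (h *: v) - f (x + t *: v))).
  apply: funext => h /=; congr (_ *: (_ - _)); congr f.
  by rewrite /shift /= scalerDl addrC -addrA [h *: 1]mulr1 (addrC _ x) addrA.
apply: DeriveDef.
  by rewrite /derivable E; exact: diff_derivable.
by rewrite /derive E -/(derive f (x + t *: v) v) D_grad.
Qed.

Lemma dotr_ge0' (u : 'rV[R]_n) : 0 <= dotr u u.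
Proof. by apply: sumr_ge0 => i _; rewrite -expr2 sqr_ge0. Qed.

Lemma descent (f : 'rV[R]_n -> R) (L : R) x v :
  (forall p, differentiable f p) -> lipschitz_grad f L ->
  (forall u w : 'rV[R]_n, dotr u w <= enorm u * enorm w) ->
  (forall (a : R) (u : 'rV[R]_n), enorm (a *: u) = `|a| * enorm u) ->
  (forall u : 'rV[R]_n, enorm u ^+ 2 = dotr u u) ->
  (forall u w w' : 'rV[R]_n, dotr (u - w) w' = dotr u w' - dotr w w') ->
  f (x + v) <= f x + dotr (grad f x) v + L / 2 * dotr v v.
Proof.
move=> df lip CS eZ eS dB.
set b := dotr (grad f x) v; set c := L / 2 * dotr v v.
pose q : {poly R} := b *: 'X + c *: 'X^2.
pose phi : R -> R := (fun s : R => f (x + s *: v)) - horner q.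
have dphi (s : R) : is_derive s (1 : R) phi (dotr (grad f (x + s *: v)) v - q^`().[s]).
  apply: is_deriveB; first exact: line_derive.
have qE s : q.[s] = s * b + s ^+ 2 * c.
  by rewrite /q !hornerE /= /c; ring.
have q'E s : q^`().[s] = b + s * L * dotr v v.
  rewrite /q derivD !derivZ derivX derivXn !hornerE /= /c; field.
  by [].
suff H : phi 1 <= phi 0.
  have : f (x + 1 *: v) - q.[1] <= f (x + 0 *: v) - q.[0] := H.
  rewrite !qE scale0r scale1r addr0 !expr1n expr0n /= !mul0r !mul1r; lra.
apply: (@ler0_derive1_nincr R phi 0 1).
- by move=> s _; case: (dphi s).
- move=> s /[!in_itv] /= /andP[s0 s1].
  rewrite derive1E; have [_ ->] := dphi s; rewrite q'E.
  have : dotr (grad f (x + s *: v)) v - b <= s * L * dotr v v.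
    rewrite /b -dB; apply: (le_trans (CS _ _)).
    apply: (le_trans (ler_wpM2r (sqrtr_ge0 _) (lip _ _))).
    have -> : x + s *: v - x = s *: v by rewrite addrC addKr.
    rewrite eZ ger0_norm ?(ltW s0) //.
    have -> : L * (s * enorm v) * enorm v = s * L * enorm v ^+ 2 by ring.
    by rewrite eS.
  lra.
- apply: continuous_subspaceT => s.
  apply/differentiable_continuous/derivable1_diffP.
  by case: (dphi s).
- by [].
- by [].
- by [].
Qed.
End Desc.
Theorem corollary3p16 (R : realType) (n d : nat)
  (g : 'rV[R]_n -> R) (h : 'rV[R]_n -> 'rV[R]_d -> R)
  (mu L : 'rV[R]_d -> R) (L_H L_J L_f L_g : R)
  (xhat : 'rV[R]_d -> 'rV[R]_n)
  (beta0 rho_lo rho_hi lam eta : R)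
  (theta z : nat -> 'rV[R]_d) (eps : nat -> R) (xt : nat -> 'rV[R]_n)
  (alpha beta : nat -> R) (i : nat -> nat) :
  (* (A1) *)
  (forall th x, differentiable (fun y => h y th) x) ->
  (forall th x, differentiable (fun y => gradx h y th) x) ->
  (forall th, 0 < mu th /\ mu th <= L th) ->
  (forall th x v, mu th * enorm v ^+ 2 <= qform (hessx h x th) v
                  /\ qform (hessx h x th) v <= L th * enorm v ^+ 2) ->
  (forall x, continuous (fun th => gradx h x th)) ->
  (forall x, continuous (fun th => hessx h x th)) ->
  (* (A2) *)
  (forall th x y v, enorm (v *m (hessx h x th - hessx h y th))
                    <= L_H * enorm (x - y) * enorm v) ->
  (forall x th, differentiable (fun t => gradx h x t) th) ->
  (forall th x y (u : 'rV[R]_d), enorm (u *m (hessxt h x th - hessxt h y th)^T)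
                    <= L_J * enorm (x - y) * enorm u) ->
  (* xhat(theta) = argmin_x h(x, theta) *)
  (forall th x, h (xhat th) th <= h x th) ->
  (* (B), with f = g o xhat *)
  C1 (g \o xhat) -> lipschitz_grad (g \o xhat) L_f ->
  C1 g -> lipschitz_grad g L_g ->
  0 < L_f -> 0 < L_g ->
  (exists m, forall x, m <= g x) ->
  (* parameters *)
  0 < beta0 -> 0 < rho_lo -> rho_lo < 1 -> 1 < rho_hi ->
  0 < lam -> lam < eta -> eta < 1 ->
  (* sequences *)
  (forall k, z k != 0) ->
  (forall k, 0 <= eps k) ->
  (forall k, enorm (xt k - xhat (theta k)) <= eps k) ->
  (forall k, 0 < alpha k) -> (forall k, 0 < beta k) ->
  (forall k, theta k.+1 = theta k - alpha k *: z k) ->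
  (forall k, enorm (z k - grad (g \o xhat) (theta k)) <= (1 - eta) * enorm (z k)) ->
  (* step-size rule *)
  let w k := enorm (grad g (xt k)) + enorm (grad g (xt k.+1)) in
  let epsb k := Num.max (eps k) (eps k.+1) in
  let disc k := (eta - lam) ^+ 2
        - 4 * L_f * (w k * epsb k + L_g * epsb k ^+ 2) / enorm (z k) ^+ 2 in
  let shat k := Num.sqrt (disc k) in
  let alo k := (eta - lam - shat k) / L_f in
  let ahi k := (eta - lam + shat k) / L_f in
  (forall k, 0 <= disc k) ->
  beta 0%N = beta0 ->
  (forall k, alpha k = rho_lo ^+ i k * beta k) ->
  (forall k, alo k <= rho_lo ^+ i k * beta k <= ahi k) ->
  (forall k j, (j < i k)%N -> ~ (alo k <= rho_lo ^+ j * beta k <= ahi k)) ->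
  (forall k, (0 < i k)%N -> rho_lo * ahi k < alpha k) ->
  (forall k, beta k.+1 = rho_hi * alpha k) ->
  enorm (grad (g \o xhat) (theta k)) @[k --> \oo] --> (0 : R).

Proof.
move=> _ _ _ _ _ _ _ _ _ _ [dF _] lipF _ _ Lf0 Lg0 [M gM] b0 rl0 rl1 rh1 l0 le le1.
move=> z0 e0 exh a0 bpos th_rec zerr w epsb disc shat alo ahi.
move=> disc0 beta0E aE aint amin ahi_lt bE.
set F := g \o xhat.
set G := fun k => grad F (theta k).
set u := fun k => dotr (z k) (z k).
have u0 k : 0 <= u k by exact: dotr_ge0.
have shat0 k : 0 <= shat k by exact: sqrtr_ge0.
have shatle k : shat k <= eta - lam.
  have -> : eta - lam = Num.sqrt ((eta - lam) ^+ 2).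
    by rewrite sqrtr_sqr ger0_norm // ltW // subr_gt0.
  rewrite /shat ler_sqrt ?sqr_ge0 // /disc.
  rewrite lerBlDr lerDl.
  have w0 : 0 <= w k by rewrite /w addr_ge0 // enorm_ge0.
  have ep0 : 0 <= epsb k by rewrite /epsb le_max e0.
  apply: divr_ge0; last by rewrite sqr_ge0.
  apply: mulr_ge0; first by rewrite mulr_ge0 // ltW.
  by rewrite addr_ge0 // ?mulr_ge0 // ?sqr_ge0 // ltW.
have ahi_lo k : (eta - lam) / L_f <= ahi k.
  by rewrite /ahi ler_pM2r ?invr_gt0 // lerDl.
have ahi_hi k : L_f * ahi k <= 2 * (eta - lam).
  rewrite /ahi mulrC -mulrA mulVf ?gt_eqF // mulr1; have := shatle k; lra.
have aup k : alpha k <= ahi k by rewrite aE; case/andP: (aint k).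
set m0 := Num.min (alpha 0%N) (rho_lo * ((eta - lam) / L_f)).
have m0pos : 0 < m0.
  rewrite /m0 lt_min a0 /= mulr_gt0 // divr_gt0 //; lra.
have alow k : m0 <= alpha k.
  elim: k => [|k IH]; first by rewrite /m0 ge_min lexx.
  have [ik0|ikpos] := eqVneq (i k.+1) 0%N.
    rewrite aE ik0 expr0 mul1r bE.
    apply: (le_trans IH); rewrite ler_peMl //; [exact: ltW | exact: ltW].
  apply: ltW; apply: le_lt_trans (ahi_lt k.+1 _); last by rewrite lt0n.
  rewrite /m0 ge_min; apply/orP; right.
  by rewrite ler_pM2l.
have dGz k : eta * u k <= dotr (G k) (z k).
  have E : dotr (G k) (z k) = u k - dotr (z k - G k) (z k) by rewrite dotrBl /u; ring.
  rewrite E.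
  have := cauchy_schwarz (z k - G k) (z k).
  have := ler_wpM2r (enorm_ge0 (z k)) (zerr k).
  have -> : (1 - eta) * enorm (z k) * enorm (z k) = u k - eta * u k.
    by rewrite -mulrA -expr2 enorm_sqr mulrBl mul1r.
  rewrite /G; lra.
have desc k : F (theta k.+1) <= F (theta k) - m0 * lam * u k.
  have := @descent R d F L_f (theta k) (- alpha k *: z k) dF lipF
    (@cauchy_schwarz R d) (@enormZ R d) (@enorm_sqr R d) (@dotrBl R d).
  have E : theta k.+1 = theta k + (- alpha k) *: z k by rewrite th_rec scaleNr.
  move=> D; rewrite E; apply: le_trans D _.
  have E1 : dotr (grad F (theta k)) (- alpha k *: z k) = - alpha k * dotr (G k) (z k).
    by rewrite dotrC dotrZl dotrC.
  have E2 : dotr (- alpha k *: z k) (- alpha k *: z k) = alpha k ^+ 2 * u k.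
    by rewrite dotrZl dotrC dotrZl /u; ring.
  rewrite E1 E2.
  have H1 := ler_wpM2l (ltW (a0 k)) (dGz k).
  have H2 : L_f * alpha k <= 2 * (eta - lam).
    by apply: le_trans (ahi_hi k); rewrite ler_wpM2l // ltW.
  have H3 := ler_wpM2r (mulr_ge0 (ltW (a0 k)) (u0 k)) H2.
  have H4 := ler_wpM2r (mulr_ge0 (ltW l0) (u0 k)) (alow k).
  nra.
have Fb k : M <= F (theta k) by exact: gM.
have sumb N : m0 * lam * series u N <= F (theta 0%N) - F (theta N).
  elim: N => [|N IH]; first by rewrite /series /= big_geq // mulr0 subrr.
  rewrite /series /= big_nat_recr //= mulrDr.
  rewrite /series /= in IH.
  have := desc N; lra.
have cvgS : cvgn (series u).
  apply: nondecreasing_is_cvgn.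
    by apply: nondecreasing_series => ? _ _; exact: u0.
  exists ((F (theta 0%N) - M) / (m0 * lam)) => _ [N _ <-].
  have mlpos : 0 < m0 * lam by rewrite mulr_gt0.
  rewrite ler_pdivlMr // mulrC.
  have := sumb N; have := Fb N; lra.
have uto0 := cvg_series_cvg_0 cvgS.
have sto0 : (fun k => Num.sqrt (u k)) @ \oo --> (0:R).
  have := continuous_cvg _ (@sqrt_continuous R 0) uto0.
  by move=> H; rewrite sqrtr0 in H; exact: H.
have sto0' : (fun k => 2 * Num.sqrt (u k)) @ \oo --> (0:R).
  by rewrite -(mulr0 2); exact: cvgMl_tmp.
apply: (@squeeze_cvgr _ _ _ _ (cst 0) (fun k => 2 * Num.sqrt (u k))) => //; last first.
  exact: cvg_cst.
apply: nearW => k; apply/andP; split; first exact: enorm_ge0.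
have T1 := enormD (z k) (G k - z k).
have E : z k + (G k - z k) = G k by rewrite addrC subrK.
rewrite E in T1.
rewrite -opprB -scaleN1r enormZ normrN normr1 mul1r in T1.
have T2 := zerr k.
have ez0 : 0 <= eta * enorm (z k) by rewrite mulr_ge0 ?enorm_ge0 // ltW // (lt_trans l0).
rewrite /G in T1; rewrite /enorm /u in T1 T2 ez0 *.
nra.
Qed.
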